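(* Let $l<u$ be real, let $\Delta Q$ be real with $0<\Delta Q\le u-l$, and let $\epsilon\ge0$, $0\le\delta<1$ with $\frac{e^\epsilon}{1-\delta}>1$. Let $b_0=\frac{\Delta Q}{\epsilon-\log(1-\delta)}$. Then $f$ is defined and continuous on $[b_0,\infty)$, and there exists a unique $b^*\in[b_0,f(b_0)]$ with $f(b^* )=b^*$. Moreover $b^*=b_0=f(b_0)$ if and only if $\Delta Q=u-l$.
   Context: For $b>0$ and $p\in[l,u]$, $C_p(b)= 1-\frac12\left(e^{-\frac{p-l}{b}}+e^{-\frac{u-p}{b}}\right)$ (the integral $\int_l^u\frac{1}{2b}e^{-|x-p|/b}dx$), and $\Delta C(b)=\frac{C_{l+\Delta Q}(b)}{C_l(b)}$. The map $f$ is defined for $b>0$ with $\epsilon-\log\Delta C(b)-\log(1-\delta)\neq 0$ by $f(b)=\frac{\Delta Q}{\epsilon-\log\Delta C(b)-\log(1-\delta)}$. *)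

(* Defs.v *)
From Stdlib Require Import Reals Lra.
Open Scope R_scope.

Definition Cp (l u p b : R) : R :=
  1 - / 2 * (exp (- ((p - l) / b)) + exp (- ((u - p) / b))).

Definition DeltaC (l u dQ b : R) : R := Cp l u (l + dQ) b / Cp l u l b.

Definition fden (l u dQ eps delta b : R) : R :=
  eps - ln (DeltaC l u dQ b) - ln (1 - delta).

Definition fmap (l u dQ eps delta b : R) : R := dQ / fden l u dQ eps delta b.

(* Main.v *)
Require Import Defs.
From Stdlib Require Import Reals Lra.
From Coquelicot Require Import Coquelicot.
Open Scope R_scope.

Lemma fcont l u dQ eps delta b : 0 < b -> 0 < Cp l u l b -> 0 < DeltaC l u dQ b -> 0 < 1 - delta -> fden l u dQ eps delta b <> 0 ->
  continuity_pt (fmap l u dQ eps delta) b.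
Proof.
intros.
apply continuity_pt_filterlim.
apply (@ex_derive_continuous R_AbsRing R_NormedModule).
unfold fmap, fden, DeltaC, Cp in *.
auto_derive. repeat split; auto. all: unfold Rdiv in *; lra.
Qed.

Lemma div_le a b c d : 0 < b -> 0 < d -> a * d <= c * b -> a / b <= c / d.
Proof.
intros Hb Hd H.
replace (a / b) with ((a * d) * / (b * d)) by (field; lra).
replace (c / d) with ((c * b) * / (b * d)) by (field; lra).
apply Rmult_le_compat_r; [| exact H].
left; apply Rinv_0_lt_compat; nra.
Qed.

Definition G x y := (2 - x - y) / (1 - x * y).

Lemma G_x x1 x2 y : 0 < x1 -> x1 <= x2 -> x2 <= 1 -> 0 < y <= 1 -> x2 * y < 1 -> G x2 y <= G x1 y.
Proof.
intros. unfold G. apply div_le; try nra.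
assert (0 <= (x2 - x1) * ((1 - y) * (1 - y))) by (apply Rmult_le_pos; nra).
nra.
Qed.

Lemma G_sym x y : G x y = G y x.
Proof. unfold G. f_equal; ring. Qed.

Lemma Cl_eq l u b : Cp l u l b = / 2 * (1 - exp (- ((u - l) / b))).
Proof.
unfold Cp. replace ((l - l) / b) with 0 by (unfold Rdiv; ring).
rewrite Ropp_0, exp_0. field.
Qed.

Lemma DC_eq l u dQ b : 0 < b ->
  DeltaC l u dQ b = G (exp (- (dQ / b))) (exp (- ((u - l - dQ) / b))).
Proof.
intros Hb. unfold DeltaC, G. rewrite Cl_eq. unfold Cp.
replace (l + dQ - l) with dQ by ring.
replace (u - (l + dQ)) with (u - l - dQ) by ring.
replace (exp (- ((u - l) / b))) with (exp (- (dQ / b)) * exp (- ((u - l - dQ) / b))).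
2:{ rewrite <- exp_plus. f_equal. field. lra. }
assert (Hne: 1 - exp (- (dQ / b)) * exp (- ((u - l - dQ) / b)) <> 0 \/
     1 - exp (- (dQ / b)) * exp (- ((u - l - dQ) / b)) = 0) by lra.
destruct Hne as [Hne|Hne].
- field. auto.
- rewrite Hne. unfold Rdiv. rewrite Rmult_0_r, !Rinv_0. ring.
Qed.

Lemma exp_neg_lt1 a : 0 < a -> exp (- a) < 1.
Proof. intros. rewrite <- exp_0. apply exp_increasing. lra. Qed.

Lemma exp_neg_le1 a : 0 <= a -> exp (- a) <= 1.
Proof. intros [H|H]. left; now apply exp_neg_lt1. subst. rewrite Ropp_0, exp_0. lra. Qed.

Lemma exp_mono a c : a <= c -> exp a <= exp c.
Proof. intros [H|H]; [left; apply exp_increasing; auto | subst; lra]. Qed.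

Lemma div_anti k b1 b2 : 0 <= k -> 0 < b1 -> b1 <= b2 -> k / b2 <= k / b1.
Proof. intros. unfold Rdiv; apply Rmult_le_compat_l; auto; apply Rinv_le_contravar; lra. Qed.

Section S.
Set Default Proof Using "All".
Variables (l u dQ : R).
Hypothesis (Hlu : l < u) (HdQ0 : 0 < dQ) (HdQ1 : dQ <= u - l).

Lemma xy_bounds b : 0 < b ->
  0 < exp (- (dQ / b)) < 1 /\ 0 < exp (- ((u - l - dQ) / b)) <= 1.
Proof.
intros. split; split; try apply exp_pos.
apply exp_neg_lt1. apply Rdiv_lt_0_compat; lra.
apply exp_neg_le1. apply Rdiv_le_0_compat; lra.
Qed.

Lemma DC_ge1 b : 0 < b -> 1 <= DeltaC l u dQ b.
Proof.
intros Hb. rewrite DC_eq by auto. destruct (xy_bounds b Hb) as [[? ?] [? ?]].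
unfold G. set (x := exp _) in *. set (y := exp (- ((u - l - dQ) / b))) in *.
apply Rmult_le_reg_r with (1 - x * y). nra.
unfold Rdiv. rewrite Rmult_assoc, Rinv_l by nra. nra.
Qed.

Lemma DC_le b : 0 < b -> DeltaC l u dQ b <= 2 - exp (- (dQ / b)).
Proof.
intros Hb. rewrite DC_eq by auto. destruct (xy_bounds b Hb) as [[? ?] [? ?]].
unfold G. set (x := exp _) in *. set (y := exp (- ((u - l - dQ) / b))) in *.
apply Rmult_le_reg_r with (1 - x * y). nra.
unfold Rdiv. rewrite Rmult_assoc, Rinv_l by nra.
assert (0 <= y * ((1 - x) * (1 - x))) by (apply Rmult_le_pos; nra). nra.
Qed.

Lemma lnDC_lt b : 0 < b -> ln (DeltaC l u dQ b) < dQ / b.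
Proof.
intros Hb. pose proof (DC_ge1 b Hb). pose proof (DC_le b Hb).
destruct (xy_bounds b Hb) as [[? ?] _].
apply Rle_lt_trans with (ln (2 - exp (- (dQ / b)))).
apply ln_le; lra.
rewrite <- (ln_exp (dQ / b)) at 2. apply ln_increasing. lra.
assert (exp (dQ / b) * exp (- (dQ / b)) = 1).
{ rewrite <- exp_plus. replace (dQ / b + - (dQ / b)) with 0 by ring. apply exp_0. }
set (x := exp (- (dQ / b))) in *. set (z := exp (dQ / b)) in *.
assert (0 < (1 - x) * (1 - x)) by nra. nra.
Qed.

Lemma DC_anti b1 b2 : 0 < b1 -> b1 <= b2 -> DeltaC l u dQ b2 <= DeltaC l u dQ b1.
Proof.
intros H1 H12. assert (H2: 0 < b2) by lra.
rewrite !DC_eq by auto.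
destruct (xy_bounds b1 H1) as [[? ?] [? ?]].
destruct (xy_bounds b2 H2) as [[? ?] [? ?]].
assert (Hx: exp (- (dQ / b1)) <= exp (- (dQ / b2))).
{ apply exp_mono. apply Ropp_le_contravar. apply div_anti; lra. }
assert (Hy: exp (- ((u - l - dQ) / b1)) <= exp (- ((u - l - dQ) / b2))).
{ apply exp_mono. apply Ropp_le_contravar. apply div_anti; lra. }
set (x1 := exp (- (dQ / b1))) in *. set (x2 := exp (- (dQ / b2))) in *.
set (y1 := exp (- ((u - l - dQ) / b1))) in *. set (y2 := exp (- ((u - l - dQ) / b2))) in *.
apply Rle_trans with (G x2 y1).
- rewrite (G_sym x2 y2), (G_sym x2 y1). apply G_x; try lra. nra.
- apply G_x; try lra. nra.
Qed.

Lemma DC_gt1 b : 0 < b -> dQ < u - l -> 1 < DeltaC l u dQ b.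
Proof.
intros Hb Hlt. rewrite DC_eq by auto. destruct (xy_bounds b Hb) as [[? ?] [? ?]].
assert (exp (- ((u - l - dQ) / b)) < 1).
{ apply exp_neg_lt1. apply Rdiv_lt_0_compat; lra. }
unfold G. set (x := exp _) in *. set (y := exp (- ((u - l - dQ) / b))) in *.
apply Rmult_lt_reg_r with (1 - x * y). nra.
unfold Rdiv. rewrite Rmult_assoc, Rinv_l by nra.
assert (0 < (1 - x) * (1 - y)) by (apply Rmult_lt_0_compat; lra). nra.
Qed.

Lemma DC_eq1 b : 0 < b -> dQ = u - l -> DeltaC l u dQ b = 1.
Proof.
intros Hb He. rewrite DC_eq by auto. destruct (xy_bounds b Hb) as [[? ?] _].
replace (u - l - dQ) with 0 by lra. unfold Rdiv. rewrite Rmult_0_l, Ropp_0, exp_0.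
unfold G. field. lra.
Qed.

End S.

Theorem theorem4p3 (l u dQ eps delta : R)
  (Hlu : l < u) (HdQ0 : 0 < dQ) (HdQ1 : dQ <= u - l)
  (Heps : 0 <= eps) (Hd0 : 0 <= delta) (Hd1 : delta < 1)
  (Hratio : exp eps / (1 - delta) > 1) :
  let b0 := dQ / (eps - ln (1 - delta)) in
  let f := fmap l u dQ eps delta in
  (* f is defined on [b0, oo) *)
  (forall b, b0 <= b -> fden l u dQ eps delta b <> 0) /\
  (* f is continuous on [b0, oo) (continuity within the interval) *)
  (forall b, b0 <= b -> limit1_in f (fun x => b0 <= x) (f b) b) /\
  (* unique fixed point in [b0, f b0], characterized *)
  (exists bs,
     (b0 <= bs <= f b0 /\ f bs = bs) /\
     (forall b, b0 <= b <= f b0 -> f b = b -> b = bs) /\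
     ((bs = b0 /\ b0 = f b0) <-> dQ = u - l)).
Proof.
intros b0 f.
set (K := eps - ln (1 - delta)) in *.
assert (HK : 0 < K).
{ unfold K. assert (exp eps > 1 - delta).
  { apply Rmult_gt_compat_r with (r := 1 - delta) in Hratio; [|lra].
    unfold Rdiv in Hratio. rewrite Rmult_assoc, Rinv_l, Rmult_1_l, Rmult_1_r in Hratio by lra. lra. }
  assert (ln (1 - delta) < ln (exp eps)) by (apply ln_increasing; lra).
  rewrite ln_exp in H0. lra. }
assert (Hb0 : 0 < b0) by (apply Rdiv_lt_0_compat; lra).
assert (Hfden : forall b, fden l u dQ eps delta b = K - ln (DeltaC l u dQ b)).
{ intros. unfold fden, K. ring. }
assert (HdQb : forall b, b0 <= b -> dQ / b <= K).
{ intros. replace K with (dQ / b0) by (unfold b0; field; lra). apply div_anti; lra. }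
assert (Hpos : forall b, b0 <= b -> 0 < fden l u dQ eps delta b).
{ intros. rewrite Hfden. pose proof (lnDC_lt l u dQ Hlu HdQ0 HdQ1 b ltac:(lra)). pose proof (HdQb b H). lra. }
assert (HleK : forall b, b0 <= b -> fden l u dQ eps delta b <= K).
{ intros. rewrite Hfden. pose proof (DC_ge1 l u dQ Hlu HdQ0 HdQ1 b ltac:(lra)).
  assert (ln 1 <= ln (DeltaC l u dQ b)) by (apply ln_le; lra). rewrite ln_1 in H1. lra. }
assert (Hfb0 : forall b, b0 <= b -> b0 <= f b).
{ intros. unfold f, fmap. replace b0 with (dQ / K) by reflexivity. apply div_anti; try lra. apply Hpos; auto. apply HleK; auto. }
assert (Hanti : forall b1 b2, b0 <= b1 -> b1 <= b2 -> f b2 <= f b1).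
{ intros. unfold f, fmap. apply div_anti; try lra. apply Hpos; auto.
  rewrite !Hfden. pose proof (DC_anti l u dQ Hlu HdQ0 HdQ1 b1 b2 ltac:(lra) H0).
  pose proof (DC_ge1 l u dQ Hlu HdQ0 HdQ1 b2 ltac:(lra)).
  assert (ln (DeltaC l u dQ b2) <= ln (DeltaC l u dQ b1)) by (apply ln_le; lra). lra. }
assert (Hcont : forall b, b0 <= b -> continuity_pt f b).
{ intros. unfold f. apply fcont; try lra.
  - rewrite Cl_eq. assert (exp (- ((u - l) / b)) < 1) by (apply exp_neg_lt1; apply Rdiv_lt_0_compat; lra). lra.
  - pose proof (DC_ge1 l u dQ Hlu HdQ0 HdQ1 b ltac:(lra)). lra.
  - pose proof (Hpos b H). lra. }
split; [intros b Hb; pose proof (Hpos b Hb); lra|].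
split.
{ intros b Hb. pose proof (Hcont b Hb) as Hc.
  unfold continuity_pt, continue_in, limit1_in, limit_in in *.
  intros e He. destruct (Hc e He) as [a [Ha H]]. exists a. split; auto.
  intros x [Hx Hd]. destruct (Req_dec x b) as [->|Hne].
  - simpl. unfold R_dist. rewrite Rminus_diag, Rabs_R0. lra.
  - apply H. split; auto. split; [exact I| auto]. }
set (g := fun x => b0 + Rabs (x - b0)).
assert (Hg : forall x, continuity_pt g x).
{ intros x. unfold g. apply continuity_pt_plus.
  - apply continuity_pt_const. intros ? ?; reflexivity.
  - apply (continuity_pt_comp (fun x => x - b0) Rabs).
    + apply continuity_pt_minus. apply continuity_pt_id. apply continuity_pt_const. intros ? ?; reflexivity.
    + apply Rcontinuity_abs. }
assert (Hgge : forall x, b0 <= g x) by (intros; unfold g; pose proof (Rabs_pos (x - b0)); lra).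
assert (Hgid : forall x, b0 <= x -> g x = x).
{ intros. unfold g. rewrite Rabs_right by lra. ring. }
set (h := fun x => f (g x) - g x).
assert (Hh : continuity h).
{ intros x. unfold h. apply continuity_pt_minus; auto.
  apply (continuity_pt_comp g f). auto. apply Hcont. auto. }
assert (Hf0 : b0 <= f b0) by (apply Hfb0; lra).
destruct (IVT_gen h b0 (f b0) 0 Hh) as [bs [Hbs Hhbs]].
{ unfold h. rewrite !Hgid by lra.
  pose proof (Hanti b0 (f b0) ltac:(lra) Hf0).
  unfold Rmin, Rmax; destruct Rle_dec; lra. }
rewrite Rmin_left, Rmax_right in Hbs by lra.
unfold h in Hhbs. rewrite Hgid in Hhbs by lra.
assert (Hfix : f bs = bs) by lra.
exists bs. split; [split; [lra|auto]|]. split.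
{ intros b Hb Hfb. destruct (Rle_dec b bs).
  - pose proof (Hanti b bs ltac:(lra) r). lra.
  - pose proof (Hanti bs b ltac:(lra) ltac:(lra)). lra. }
split.
- intros [E1 E2]. destruct (Req_dec dQ (u - l)) as [|Hne]; auto. exfalso.
  assert (Hlt : dQ < u - l) by lra.
  assert (Hfd : fden l u dQ eps delta b0 = K).
  { pose proof (Hpos b0 ltac:(lra)).
    assert (fden l u dQ eps delta b0 = dQ / f b0) by (unfold f, fmap; field; lra).
    rewrite H0, <- E2. unfold b0. field. lra. }
  rewrite Hfden in Hfd.
  assert (ln (DeltaC l u dQ b0) = ln 1) by (rewrite ln_1; lra).
  pose proof (DC_gt1 l u dQ Hlu HdQ0 HdQ1 b0 Hb0 Hlt).
  apply ln_inv in H; lra.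
- intros He.
  assert (Hc : forall b, b0 <= b -> f b = b0).
  { intros. unfold f, fmap. rewrite Hfden, DC_eq1 by (auto; lra). rewrite ln_1.
    unfold b0. f_equal. fold K. ring. }
  split; [rewrite <- Hfix; apply Hc; lra | symmetry; apply Hc; lra].
Qed.
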